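(* Let $a>0$, $b>0$, $g>0$, $m>0$, $n>0$ and $0<e<1$, and consider the quadratic equation in $y$ $$a_1y^2+a_2y+a_3=0,$$ where $a_1=(eg+1)n$, $a_2=(b+m)(eg+1)+n(e-a)$, $a_3=e(b+m)-ab$, and let $\Delta=a_2^2-4a_1a_3$. Then: (1) if $a>\frac{e(m+b)}{b}$, the equation has a positive root $y_1=\frac{-a_2+\sqrt{\Delta}}{2a_1}$; (2) if $n>\frac{(eg+1)b^2+m(eg+1)b}{me}$ and $a=\frac{e(m+b)}{b}$, the equation has a positive root $y_1=\frac{-a_2+\sqrt{\Delta}}{2a_1}$.
   Context: This quadratic is the equation satisfied by the $y$-coordinate of a positive (endemic) equilibrium of the planar system $\dot x=a-ex-\frac{xy}{1+gy}$, $\dot y=\frac{xy}{1+gy}-y-\frac{my}{b+ny}$ (a rescaled SIR epidemic model with saturated incidence and saturated treatment), after substituting $x=\frac{a(1+gy)}{e+(eg+1)y}$. *)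

(* Defs.v *)
From Stdlib Require Import Reals.
Open Scope R_scope.

Definition qa1 (e g n : R) : R := (e*g+1)*n.
Definition qa2 (a b e g m n : R) : R := (b+m)*(e*g+1) + n*(e-a).
Definition qa3 (a b e m : R) : R := e*(b+m) - a*b.
Definition qDelta (a b e g m n : R) : R :=
  (qa2 a b e g m n)^2 - 4*(qa1 e g n)*(qa3 a b e m).
Definition qy1 (a b e g m n : R) : R :=
  (- qa2 a b e g m n + sqrt (qDelta a b e g m n)) / (2 * qa1 e g n).

(* Main.v *)
Require Import Defs.
From Stdlib Require Import Reals Lra Psatz.
Open Scope R_scope.

Theorem lemma1p1 (a b g m n e : R) :
  0 < a -> 0 < b -> 0 < g -> 0 < m -> 0 < n -> 0 < e < 1 ->
  ((a > e*(m+b)/b) \/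
   (n > ((e*g+1)*b^2 + m*(e*g+1)*b)/(m*e) /\ a = e*(m+b)/b)) ->
  0 <= qDelta a b e g m n /\
  0 < qy1 a b e g m n /\
  qa1 e g n * (qy1 a b e g m n)^2 + qa2 a b e g m n * qy1 a b e g m n
    + qa3 a b e m = 0.
Proof.
  intros Ha Hb Hg Hm Hn He H; destruct He as [He0 He1].
  assert (Ha1 : 0 < qa1 e g n) by (unfold qa1; assert (0 < e*g) by (apply Rmult_lt_0_compat; lra); apply Rmult_lt_0_compat; lra).
  assert (Hcase : (qa3 a b e m < 0) \/ (qa3 a b e m = 0 /\ qa2 a b e g m n < 0)).
  { destruct H as [H | [H1 H2]].
    - left. unfold qa3. apply Rmult_gt_compat_r with (r := b) in H; [|lra].
      unfold Rdiv in H. rewrite Rmult_assoc, Rinv_l in H by lra. lra.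
    - right. assert (Hab : a * b = e*(m+b)) by (rewrite H2; field; lra).
      split. unfold qa3; lra.
      unfold qa2.
      assert (Hme : 0 < m*e) by nra.
      apply Rmult_gt_compat_r with (r := m*e) in H1; [|lra].
      unfold Rdiv in H1. rewrite Rmult_assoc, Rinv_l in H1 by lra.
      assert (Hb2 : (b+m)*(e*g+1)*b < n*(a-e)*b) by nra.
      nra. }
  assert (HD : 0 <= qDelta a b e g m n).
  { unfold qDelta. destruct Hcase as [H3 | [H3 _]]; nra. }
  set (s := sqrt (qDelta a b e g m n)).
  assert (Hs0 : 0 <= s) by apply sqrt_pos.
  assert (Hs2 : s * s = qDelta a b e g m n) by apply sqrt_sqrt, HD.
  unfold qy1; fold s.
  split; [exact HD|]. split.
  - apply Rdiv_lt_0_compat; [|lra].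
    unfold qDelta in Hs2.
    destruct Hcase as [H3 | [H3 H4]]; nra.
  - unfold qDelta in Hs2. field_simplify; [|lra].
    unfold Rdiv. apply Rmult_eq_0_compat_r.
    replace (s^2) with (s*s) by ring. rewrite Hs2. ring.
Qed.
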